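(* For every positive integer $r$ and nonnegative integer $n$, as formal power series in $t$, \[ \frac{A^r_n(t,q)}{\prod_{i=0}^n(1-tq^{ri})}=\sum_{k=0}^n\frac{q^{r\binom{k+1}{2}+(1-r)k}\,[r]_q^k\,[k]_{q^r}!\,S_r[n,k]\,t^k}{\prod_{i=0}^k(1-tq^{ri})}. \]
   Context: $[k]_q=1+\dots+q^{k-1}$, $[0]_q=0$, $[k]_q!=\prod_{i=1}^k[i]_q$; the subscript $q^r$ means $q$ replaced by $q^r$. The $r$-colored $q$-Stirling numbers of the second kind are defined by $S_r[0,k]=\delta_{0k}$ and $S_r[n,k]=S_r[n-1,k-1]+[rk+1]_qS_r[n-1,k]$ for $n\ge1$. The colored permutation group $\mathbb{Z}_r\wr\mathfrak{S}_n$ consists of words $\pi=\pi_1^{z_1}\cdots\pi_n^{z_n}$ with $\pi_1\cdots\pi_n\in\mathfrak{S}_n$ and colors $z_i\in\{0,\dots,r-1\}$, where $k^0$ is written $k$; these letters are totally ordered by $n^{r-1}<\dots<n^1<\dots<1^{r-1}<\dots<1^1<0<1<\dots<n$. With $\pi_0^{z_0}=0$, $\mathrm{Des}_r(\pi)=\{i\in\{0,\dots,n-1\}:\pi_i^{z_i}>\pi_{i+1}^{z_{i+1}}\}$, $\mathrm{des}_r(\pi)=|\mathrm{Des}_r(\pi)|$, $\mathrm{fmaj}_r(\pi)=r\sum_{i\in\mathrm{Des}_r(\pi)}i+\sum_{i=1}^nz_i$, and $A^r_n(t,q)=\sum_{\pi\in\mathbb{Z}_r\wr\mathfrak{S}_n}t^{\mathrm{des}_r(\pi)}q^{\mathrm{fmaj}_r(\pi)}$.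 *)

(* Defs.v *)
From HB Require Import structures.
From mathcomp Require Import all_boot all_order all_algebra all_fingroup.
Set Implicit Arguments. Unset Strict Implicit. Unset Printing Implicit Defensive.
Import Order.TTheory GRing.Theory Num.Theory.
Local Open Scope ring_scope.

Definition qint (R : pzSemiRingType) (x : R) (k : nat) : R :=
  \sum_(i < k) x ^+ i.

Definition qfact (R : pzSemiRingType) (x : R) (k : nat) : R :=
  \prod_(i < k) qint x i.+1.

Fixpoint qstir (R : pzSemiRingType) (q : R) (r n k : nat) : R :=
  match n with
  | 0 => (k == 0%N)%:R
  | n'.+1 =>
      (match k with 0 => 0 | k'.+1 => qstir q r n' k' end)
      + qint q (r * k + 1) * qstir q r n' k
  end.

(* Colored letters: a letter k^c is encoded as the pair (k, c), k in 1..n,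
   c in 0..r-1; the letter 0 is encoded as (0, 0).
   Total order: n^{r-1} < ... < n^1 < ... < 1^{r-1} < ... < 1^1 < 0 < 1 < ... < n.
   letter_lt a b  <=>  a < b  in this order. *)
Definition letter_lt (a b : nat * nat) : bool :=
  let: (k, c) := a in
  let: (k', c') := b in
  if c == 0%N then (c' == 0%N) && (k < k')%N
  else [|| c' == 0%N, (k' < k)%N | (k == k') && (c' < c)%N].

(* An element of Z_r wr S_n is a pair (s, z) with s : 'S_n (the value s i
   in 0..n-1 stands for the letter (s i)+1) and colors z : 'I_n -> 'I_r.
   colored_letter s z i is the i-th letter pi_i^{z_i}, for i = 0..n, with
   pi_0^{z_0} = 0. *)
Definition colored_letter (n r : nat) (s : 'S_n) (z : {ffun 'I_n -> 'I_r})
  (i : nat) : nat * nat :=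
  match i with
  | 0 => (0%N, 0%N)
  | i'.+1 =>
      match insub i' : option 'I_n with
      | Some j => ((s j).+1, nat_of_ord (z j))
      | None => (0%N, 0%N)
      end
  end.

Definition is_descent (n r : nat) (s : 'S_n) (z : {ffun 'I_n -> 'I_r})
  (i : 'I_n) : bool :=
  letter_lt (colored_letter s z i.+1) (colored_letter s z i).

Definition des_r (n r : nat) (s : 'S_n) (z : {ffun 'I_n -> 'I_r}) : nat :=
  #|[set i : 'I_n | is_descent s z i]|.

Definition fmaj_r (n r : nat) (s : 'S_n) (z : {ffun 'I_n -> 'I_r}) : nat :=
  (r * (\sum_(i : 'I_n | is_descent s z i) (i : nat))
   + \sum_(j : 'I_n) (z j : nat))%N.

Definition colored_eulerian (R : pzSemiRingType) (r n : nat) (t q : R) : R :=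
  \sum_(s : 'S_n) \sum_(z : {ffun 'I_n -> 'I_r})
     t ^+ des_r s z * q ^+ fmaj_r s z.

(* Main.v *)
Set Warnings "-notation-overridden -ambiguous-paths -deprecated -parsing -coercions".
Require Import Defs.
From HB Require Import structures.
From mathcomp Require Import all_boot all_order all_algebra all_fingroup.
From mathcomp Require Import fraction.
From mathcomp Require Import ring zify.
Set Implicit Arguments. Unset Strict Implicit. Unset Printing Implicit Defensive.
Import Order.TTheory GRing.Theory Num.Theory.
Local Open Scope ring_scope.

Lemma sum_lift (R : nmodType) n (p : 'I_n.+1) (F : 'I_n.+1 -> R) :
  \sum_(j : 'I_n.+1) F j = F p + \sum_(j : 'I_n) F (lift p j).
Proof.
rewrite (bigD1 p) //=; congr (_ + _).
case: n p F => [|n] p F.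
  by rewrite big_ord0 big1 // => j; case: p j => [[]] // ? [[]].
rewrite (reindex (lift p)) /=; first by apply: eq_bigl => j; rewrite eq_sym neq_lift.
exists (fun k => odflt ord0 (unlift p k)) => k; first by rewrite liftK.
by case: unliftP => [j -> | ->] //=; rewrite inE eqxx.
Qed.

Lemma sum_perm_split (R : nmodType) n (G : 'S_n.+1 -> R) :
  \sum_(s : 'S_n.+1) G s = \sum_(p : 'I_n.+1) \sum_(s : 'S_n) G (lift_perm p ord_max s).
Proof.
rewrite (partition_big (fun s : 'S_n.+1 => s^-1%g ord_max) xpredT) //=.
apply: eq_bigr => i0 _.
have -> : \sum_(s : 'S_n.+1 | (s^-1)%g ord_max == i0) G s
        = \sum_(s : 'S_n.+1 | s i0 == ord_max) G s.
  apply: eq_bigl => s; apply/eqP/eqP => [<- | <-]; by rewrite ?permKV ?permK.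
set j0 := (ord_max : 'I_n.+1).
rewrite (reindex (lift_perm i0 j0)); last first.
  pose ulsf i (s : 'S_n.+1) k := odflt k (unlift (s i) (s (lift i k))).
  have ulsfK i (s : 'S_n.+1) k: lift (s i) (ulsf i s k) = s (lift i k).
    rewrite /ulsf; have:= neq_lift i k.
    by rewrite -(can_eq (permK s)) => /unlift_some[] ? ? ->.
  have inj_ulsf: injective (ulsf i0 _).
    move=> s; apply: can_inj (ulsf (s i0) s^-1%g) _ => k'.
    by rewrite {1}/ulsf ulsfK !permK liftK.
  exists (fun s => perm (inj_ulsf s)) => [s _ | s].
    by apply/permP=> k'; rewrite permE /ulsf lift_perm_lift lift_perm_id liftK.
  move/(s _ =P _) => si0; apply/permP=> k.
  case: (unliftP i0 k) => [k'|] ->; rewrite ?lift_perm_id //.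
  by rewrite lift_perm_lift -si0 permE ulsfK.
by apply: eq_bigl => s; rewrite lift_perm_id eqxx.
Qed.

Definition zins n r (p : 'I_n.+1) (c : 'I_r) (z : {ffun 'I_n -> 'I_r}) : {ffun 'I_n.+1 -> 'I_r} :=
  [ffun i => if unlift p i is Some k then z k else c].

Lemma sum_ffun_split (R : nmodType) n r (p : 'I_n.+1) (H : {ffun 'I_n.+1 -> 'I_r} -> R) :
  \sum_(z : {ffun 'I_n.+1 -> 'I_r}) H z
  = \sum_(c : 'I_r) \sum_(z : {ffun 'I_n -> 'I_r}) H (zins p c z).
Proof.
rewrite pair_big /=.
rewrite (reindex (fun cz : 'I_r * {ffun 'I_n -> 'I_r} => zins p cz.1 cz.2)) //=.
exists (fun z : {ffun 'I_n.+1 -> 'I_r} => (z p, [ffun k => z (lift p k)])) => [[c z] _ | z _] /=.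
  congr (_, _); first by rewrite /zins ffunE unlift_none.
  by apply/ffunP => k; rewrite !ffunE liftK.
apply/ffunP => i; rewrite /zins !ffunE.
by case: unliftP => [k -> | ->]; rewrite ?ffunE.
Qed.

Lemma zins_sum n r (p : 'I_n.+1) (c : 'I_r) (z : {ffun 'I_n -> 'I_r}) :
  (\sum_(j : 'I_n.+1) (zins p c z j : nat) = c + \sum_(j : 'I_n) (z j : nat))%N.
Proof.
rewrite (sum_lift p) /zins ffunE unlift_none; congr (_ + _)%N.
by apply: eq_bigr => j _; rewrite ffunE liftK.
Qed.

Definition wt (R : comPzRingType) (Q x : R) (n : nat) (f : nat -> bool) : R :=
  \prod_(i < n) (if f i then x * Q ^+ i else 1).

Definition insb (B : bool) (p : nat) (f : nat -> bool) (i : nat) : bool :=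
  if (i < p)%N then f i else if i == p then B else if i == p.+1 then ~~B else f i.-1.

Lemma wtS (R : comPzRingType) (Q x : R) n f :
  wt Q x n.+1 f = wt Q x n f * (if f n then x * Q ^+ n else 1).
Proof. by rewrite /wt big_ord_recr. Qed.

Lemma eq_wt (R : comPzRingType) (Q x : R) n f g :
  (forall i, (i < n)%N -> f i = g i) -> wt Q x n f = wt Q x n g.
Proof. by move=> H; apply: eq_bigr => i _; rewrite H. Qed.

Lemma slot (R : comPzRingType) (Q x : R) (B : bool) n f :
  (1 - Q) * \sum_(p < n.+1) wt Q x n.+1 (insb B p f)
  = (1 - x * Q ^+ n.+1) * wt Q x n f - (1 - x) * Q ^+ (~~B) * wt Q (x * Q) n f.
Proof.
elim: n => [|n IH].
  rewrite big_ord1 wtS /wt !big_ord0 /insb /=.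
  by case: B => /=; ring.
rewrite big_ord_recr /= big_ord_recr /=.
rewrite big_ord_recr /= in IH.
set S := \sum_(i < n) _ in IH *.
have -> : \sum_(i < n) wt Q x n.+2 (insb B i f) =
          S * (if f n then x * Q ^+ n.+1 else 1).
  rewrite big_distrl /=; apply: eq_bigr => i _.
  rewrite wtS /insb /=.
  have hi := ltn_ord i.
  have -> : (n.+1 < i)%N = false by lia.
  have -> : (n.+1 == i) = false by lia.
  by have -> : (n.+1 == i.+1) = false by lia.
have e1 : wt Q x n.+1 (insb B n f) = wt Q x n f * (if B then x * Q ^+ n else 1).
  rewrite wtS /insb ltnn eqxx; congr (_ * _); apply: eq_wt => i hi; by rewrite hi.
have e2 : wt Q x n.+2 (insb B n f) = wt Q x n f * (if B then x * Q ^+ n else 1)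
            * (if ~~B then x * Q ^+ n.+1 else 1).
  rewrite wtS e1 /insb.
  have -> : (n.+1 < n)%N = false by lia.
  have -> : (n.+1 == n) = false by lia.
  by rewrite eqxx.
have e3 : wt Q x n.+2 (insb B n.+1 f) = wt Q x n f * (if f n then x * Q ^+ n else 1)
            * (if B then x * Q ^+ n.+1 else 1).
  rewrite wtS /insb ltnn eqxx wtS /= ltnSn; congr (_ * _ * _).
  by apply: eq_wt => i hi; rewrite (ltn_trans hi (ltnSn n)).
have v1 : wt Q (x * Q) n.+1 f = wt Q (x * Q) n f * (if f n then x * Q * Q ^+ n else 1).
  by rewrite wtS.
have w1 : wt Q x n.+1 f = wt Q x n f * (if f n then x * Q ^+ n else 1) by rewrite wtS.
rewrite e1 in IH; rewrite e2 e3 v1 w1.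
set W := wt Q x n f in IH *; set V := wt Q (x * Q) n f in IH *.
have E : (1 - Q) * S = (1 - x * Q ^+ n.+1) * W - (1 - x) * Q ^+ (~~ B) * V
             - (1 - Q) * (W * (if B then x * Q ^+ n else 1)).
  by rewrite -IH; ring.
set cf := (if f n then _ else _).
have -> : forall Y Z, (1 - Q) * (S * cf + Y + Z) = ((1 - Q) * S) * cf + (1 - Q) * (Y + Z).
  by move=> Y Z; ring.
rewrite E /cf !exprS; clearbody S W V; clear e1 e2 e3 IH E; case: (f n); case: B => /=; ring.
Qed.

Lemma clS n r (s : 'S_n) (z : {ffun 'I_n -> 'I_r}) (j : 'I_n) :
  colored_letter s z j.+1 = ((s j).+1, (z j : nat)).
Proof. by rewrite /colored_letter valK. Qed.

Lemma clN n r (s : 'S_n) (z : {ffun 'I_n -> 'I_r}) k :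
  (n <= k)%N -> colored_letter s z k.+1 = (0%N, 0%N).
Proof. by move=> h; rewrite /colored_letter insubN // -leqNgt. Qed.

Lemma cl_fst n r (s : 'S_n) (z : {ffun 'I_n -> 'I_r}) k :
  ((colored_letter s z k).1 <= n)%N.
Proof.
case: k => [|k] //; case: (ltnP k n) => hk; last by rewrite clN.
by rewrite (clS s z (Ordinal hk)) /=.
Qed.

Lemma lt_new_l n (a : nat * nat) (c : nat) : (a.1 <= n)%N ->
  letter_lt (n.+1, c) a = (c != 0%N).
Proof.
case: a => k c' /= h; rewrite /letter_lt.
case: eqP => [_|hc] /=; first by case: (c' == 0%N) => //=; lia.
have -> : (k < n.+1)%N by lia. by rewrite orbT.
Qed.

Lemma lt_new_r n (a : nat * nat) (c : nat) : (a.1 <= n)%N ->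
  letter_lt a (n.+1, c) = (c == 0%N).
Proof.
case: a => k c' /= h; rewrite /letter_lt.
case: eqP => [_|hc'] /=; first by case: (c == 0%N) => //=; lia.
have -> : (n.+1 < k)%N = false by lia.
have -> : (k == n.+1) = false by lia.
by rewrite orbF.
Qed.

Lemma letter_ins n r (s : 'S_n) (z : {ffun 'I_n -> 'I_r}) (p : 'I_n.+1) (c : 'I_r) k :
  colored_letter (lift_perm p ord_max s) (zins p c z) k =
  if (k <= p)%N then colored_letter s z k
  else if k == p.+1 then (n.+1, (c : nat)) else colored_letter s z k.-1.
Proof.
case: k => [|k]; first by [].
rewrite eqSS -[k.+1.-1]/k.
case: (ltnP k n.+1) => hk; last first.
  rewrite clN //.
  have -> : (k < p)%N = false by have := ltn_ord p; lia.
  have -> : (k == p) = false by have := ltn_ord p; lia.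
  by case: k hk => [|k] hk //; rewrite clN.
rewrite (clS _ _ (Ordinal hk)).
case: (unliftP p (Ordinal hk)) => [j hj | hj].
  rewrite hj lift_perm_lift /zins ffunE liftK.
  have hv : k = bump p j by rewrite -[k]/(nat_of_ord (Ordinal hk)) hj.
  have hs : (lift ord_max (s j) : nat) = s j.
    rewrite /= /bump; have := ltn_ord (s j); case: leqP => //.
  rewrite hs; move: hv; rewrite /bump; case: (leqP p j) => hpj hv.
    rewrite hv add1n.
    have -> : (j.+1 < p)%N = false by apply/negbTE; rewrite -leqNgt; exact: leqW hpj.
    have -> : (j.+1 == p) = false by apply/negbTE; rewrite neq_ltn ltnS hpj orbT.
    by rewrite (clS _ _ j).
  by rewrite hv add0n hpj (clS _ _ j).

rewrite hj lift_perm_id /zins ffunE unlift_none.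
have hv : k = p by rewrite -[k]/(nat_of_ord (Ordinal hk)) hj.
by rewrite hv ltnn eqxx.
Qed.

Definition bits n r (s : 'S_n) (z : {ffun 'I_n -> 'I_r}) (i : nat) : bool :=
  letter_lt (colored_letter s z i.+1) (colored_letter s z i).

Lemma bits_ins n r (s : 'S_n) (z : {ffun 'I_n -> 'I_r}) (p : 'I_n.+1) (c : 'I_r) i :
  bits (lift_perm p ord_max s) (zins p c z) i = insb (c != 0%N :> nat) p (bits s z) i.
Proof.
rewrite /bits /insb !letter_ins.
case: (ltnP i p) => h1.
  by rewrite ltnW.
rewrite eqSS -[i.+1.-1]/i.
case: (i =P p) => [-> | h2].
  by rewrite ?eqxx leqnn lt_new_l ?cl_fst.
case: (i =P p.+1) => [-> | h3].
  have -> : (p.+1 <= p)%N = false by lia.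
  by rewrite ?eqxx lt_new_r ?cl_fst // negbK.
have -> : (i <= p)%N = false by lia.
case: i h1 h2 h3 => [|i] h1 h2 h3; first lia.
by [].
Qed.

Definition colsum n r (z : {ffun 'I_n -> 'I_r}) : nat := (\sum_(j : 'I_n) (z j : nat))%N.

Lemma weight (R : comPzRingType) n r (s : 'S_n) (z : {ffun 'I_n -> 'I_r}) (x q : R) :
  x ^+ des_r s z * q ^+ fmaj_r s z = wt (q ^+ r) x n (bits s z) * q ^+ colsum z.
Proof.
rewrite /fmaj_r exprD exprM mulrA; congr (_ * _).
rewrite /des_r cardsE /wt -big_mkcond big_split /= prodrXr.
congr (_ * _); by rewrite -prodr_const.
Qed.

Lemma sumQ (R : comPzRingType) r (q : R) : (0 < r)%N ->
  \sum_(c < r) q ^+ c * (q ^+ r) ^+ (~~ (c != 0%N :> nat)) = q * qint q r.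
Proof.
case: r => [|r] // _.
rewrite big_ord_recl /= expr0 mul1r expr1 /qint big_ord_recr /= mulrDr addrC -exprS.
congr (_ + _); rewrite big_distrr; apply: eq_bigr => i _ /=.
by rewrite expr0 mulr1 -exprS.
Qed.

Lemma A_rec (R : comPzRingType) r n (x q : R) : (0 < r)%N ->
  (1 - q ^+ r) * colored_eulerian r n.+1 x q =
  qint q r * (1 - x * (q ^+ r) ^+ n.+1) * colored_eulerian r n x q
  - q * qint q r * (1 - x) * colored_eulerian r n (x * q ^+ r) q.
Proof.
move=> hr; set Q := q ^+ r.
have step1 : colored_eulerian r n.+1 x q =
  \sum_(s : 'S_n) \sum_(z : {ffun 'I_n -> 'I_r}) q ^+ colsum z *
     \sum_(c < r) q ^+ c * \sum_(p < n.+1) wt Q x n.+1 (insb (c != 0%N :> nat) p (bits s z)).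
  rewrite /colored_eulerian sum_perm_split.
  transitivity (\sum_(p < n.+1) \sum_(s : 'S_n) \sum_(c < r) \sum_(z : {ffun 'I_n -> 'I_r})
      wt Q x n.+1 (insb (c != 0%N :> nat) p (bits s z)) * (q ^+ c * q ^+ colsum z)).
    apply: eq_bigr => p _; apply: eq_bigr => s _; rewrite (sum_ffun_split p).
    apply: eq_bigr => c _; apply: eq_bigr => z _.
    rewrite weight /colsum zins_sum exprD; congr (_ * _).
    by apply: eq_wt => i _; exact: bits_ins.
  rewrite exchange_big; apply: eq_bigr => s _.
  rewrite exchange_big /=.
  under eq_bigr => c _ do rewrite exchange_big /=.
  rewrite exchange_big /=; apply: eq_bigr => z _.
  rewrite big_distrr; apply: eq_bigr => c _ /=.
  rewrite !big_distrr; apply: eq_bigr => p _ /=; ring.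
set a := qint q r * _; set b := q * qint q r * _.
rewrite step1 /colored_eulerian !big_distrr -sumrB; apply: eq_bigr => s _.
rewrite !big_distrr -sumrB; apply: eq_bigr => z _.
rewrite !weight.
transitivity (q ^+ colsum z * \sum_(c < r) (q ^+ c * ((1 - Q) *
     \sum_(p < n.+1) wt Q x n.+1 (insb (c != 0%N :> nat) p (bits s z))))).
  rewrite /= mulrCA big_distrr /=; congr (_ * _); apply: eq_bigr => c _; ring.
under eq_bigr => c _ do rewrite (slot Q x).
set W := wt Q x n (bits s z); set V := wt Q (x * Q) n (bits s z).
have e : forall c : 'I_r, q ^+ c * ((1 - x * Q ^+ n.+1) * W - (1 - x) * Q ^+ (~~ (c != 0%N :> nat)) * V)
   = q ^+ c * ((1 - x * Q ^+ n.+1) * W) - (q ^+ c * Q ^+ (~~ (c != 0%N :> nat))) * ((1 - x) * V).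
  by move=> c; ring.
under eq_bigr do rewrite e.
rewrite sumrB -!big_distrl /= sumQ //.
rewrite /a /b -/(qint q r); ring.
Qed.

Definition Pk (F : fieldType) (q : F) r k x := \prod_(i < k.+1) (1 - x * q ^+ (r * i)%N).
Definition Tk (F : fieldType) (q : F) r k x :=
  q ^+ (r * 'C(k.+1, 2) + k - r * k)%N * (qint q r) ^+ k * qfact (q ^+ r) k * x ^+ k / Pk q r k x.
Definition Rn (F : fieldType) (q : F) r n x := \sum_(k < n.+1) qstir q r n k * Tk q r k x.
Definition good (F : fieldType) (q : F) r x := forall m, 1 - x * q ^+ (r * m)%N != 0.

Lemma good_shift (F : fieldType) (q : F) r x : good q r x -> good q r (x * q ^+ r).
Proof. by move=> h m; rewrite -mulrA -exprD -mulnS; apply: h. Qed.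

Lemma Pk_neq0 (F : fieldType) (q : F) r k x : good q r x -> Pk q r k x != 0.
Proof. by move=> h; rewrite /Pk; apply/prodf_neq0 => i _; apply: h. Qed.

Lemma Pk_recr (F : fieldType) (q : F) r k x :
  Pk q r k.+1 x = Pk q r k x * (1 - x * q ^+ (r * k.+1)%N).
Proof. by rewrite /Pk big_ord_recr. Qed.

Lemma Pk_recl (F : fieldType) (q : F) r k x :
  Pk q r k.+1 x = (1 - x) * Pk q r k (x * q ^+ r).
Proof.
rewrite /Pk big_ord_recl /= muln0 expr0 mulr1; congr (_ * _).
by apply: eq_bigr => i _; rewrite /bump /= add1n -mulrA -exprD -mulnS.
Qed.

Lemma qstir_gt (R : pzSemiRingType) (q : R) r n k : (n < k)%N -> qstir q r n k = 0.
Proof.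
elim: n k => [|n IH] k h.
  by case: k h => [|k] //= _; rewrite mulr0n.
case: k h => [|k] // h /=.
by rewrite IH // IH ?mulr0 ?addr0 // ltnW.
Qed.

Lemma qint_mul (R : comPzRingType) (y : R) m : (1 - y) * qint y m = 1 - y ^+ m.
Proof.
elim: m => [|m IH]; first by rewrite /qint big_ord0 mulr0 expr0 subrr.
rewrite /qint big_ord_recr /= mulrDr -/(qint y m) IH exprS; ring.
Qed.

Lemma qfactS (R : pzSemiRingType) (y : R) k : qfact y k.+1 = qfact y k * qint y k.+1.
Proof. by rewrite /qfact big_ord_recr. Qed.

Lemma expo_rec r k :
  (r * 'C(k.+2, 2) + k.+1 - r * k.+1 = (r * 'C(k.+1, 2) + k - r * k) + (r * k + 1))%N.
Proof.
have e1 : 'C(k.+2, 2) = (k.+1 + 'C(k.+1, 2))%N by rewrite binS bin1 addnC.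
have e2 : 'C(k.+1, 2) = (k + 'C(k, 2))%N by rewrite binS bin1 addnC.
rewrite e1 e2; set c := 'C(k, 2); nia.
Qed.

Lemma T_rec (F : fieldType) (q : F) r k x : good q r x ->
  (1 - q ^+ r) * (Tk q r k.+1 x + qint q (r * k + 1) * Tk q r k x)
  = qint q r * (Tk q r k x - q * Tk q r k (x * q ^+ r)).
Proof.
move=> gx.
set Q := q ^+ r; set s := qint q r.
have hP := Pk_neq0 k.+1 gx.
have ha : Pk q r k x = Pk q r k.+1 x * (1 - x * q ^+ (r * k.+1)%N)^-1.
  by rewrite Pk_recr -mulrA divff ?mulr1 // gx.
have h1x : 1 - x != 0 by have := gx 0%N; rewrite muln0 expr0 mulr1.
have hb : Pk q r k (x * Q) = Pk q r k.+1 x * (1 - x)^-1.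
  by rewrite Pk_recl mulrAC divff ?mul1r.
set C0 := q ^+ (r * 'C(k.+1, 2) + k - r * k)%N * s ^+ k * qfact Q k.
set P1 := Pk q r k.+1 x.
set u := Q ^+ k.
have eT1 : Tk q r k.+1 x = C0 * (q * u * s * qint Q k.+1 * x) * x ^+ k / P1.
  rewrite /Tk qfactS expo_rec exprD (exprS s) exprS addn1 exprS exprM -/Q -/u /C0 /P1; ring.
have eT0 : Tk q r k x = C0 * x ^+ k / Pk q r k x by [].
have eT2 : Tk q r k (x * Q) = C0 * x ^+ k * u / Pk q r k (x * Q).
  by rewrite /Tk exprMn -/u /C0; ring.
have hy : q ^+ (r * k.+1)%N = Q * u by rewrite mulnS exprD exprM.
have hK : (1 - Q) * qint Q k.+1 = 1 - Q * u by rewrite qint_mul exprS.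
have hs : (1 - q) * s = 1 - Q by rewrite qint_mul.
have hI : (1 - Q) * qint q (r * k + 1) = s * (1 - q * u).
  by rewrite -hs -mulrA mulrCA qint_mul addn1 exprS exprM.
rewrite eT1 eT0 eT2 ha hb hy !invfM !invrK.
transitivity (((1 - Q) * qint Q k.+1) * (C0 * q * u * s * x * x ^+ k / P1)
   + ((1 - Q) * qint q (r * k + 1)) * (C0 * x ^+ k / P1 * (1 - x * (Q * u)))); first by ring.
rewrite hK hI; ring.
Qed.

Lemma R_rec (F : fieldType) (q : F) r n x : good q r x ->
  (1 - q ^+ r) * Rn q r n.+1 x = qint q r * (Rn q r n x - q * Rn q r n (x * q ^+ r)).
Proof.
move=> gx.
have e : Rn q r n.+1 x = \sum_(k < n.+1) qstir q r n k * (Tk q r k.+1 x + qint q (r * k + 1) * Tk q r k x).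
  rewrite /Rn.
  have -> : \sum_(k < n.+2) qstir q r n.+1 k * Tk q r k x =
     \sum_(k < n.+2) (match (k : nat) with 0 => 0 | k'.+1 => qstir q r n k' end * Tk q r k x)
     + \sum_(k < n.+2) qint q (r * k + 1) * qstir q r n k * Tk q r k x.
    by rewrite -big_split; apply: eq_bigr => k _ /=; rewrite mulrDl mulrA.
  rewrite big_ord_recl /= mul0r add0r [X in _ + X = _]big_ord_recr /= qstir_gt //.
  rewrite mulr0 mul0r addr0.
  rewrite -big_split /=; apply: eq_bigr => k _.
  rewrite add0n /bump leq0n add1n; ring.
rewrite e big_distrr /= /Rn.
under eq_bigr => k _ do rewrite mulrCA T_rec //.
rewrite [q * _]big_distrr /= -sumrB big_distrr /=.
apply: eq_bigr => k _ /=; ring.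
Qed.

Lemma A0 (R : comPzRingType) r (x q : R) : colored_eulerian r 0 x q = 1.
Proof.
rewrite /colored_eulerian.
have e : forall (s : 'S_0) (z : {ffun 'I_0 -> 'I_r}), x ^+ des_r s z * q ^+ fmaj_r s z = 1.
  move=> s z.
  have -> : des_r s z = 0%N.
    by apply/eqP; rewrite cards_eq0; apply/eqP/setP => -[m hm].
  by rewrite /fmaj_r !big_ord0 muln0 expr0 mul1r.
under eq_bigr do under eq_bigr do rewrite e.
rewrite sumr_const /=.
rewrite [X in _ *+ X](_ : _ = 1%N); last first.
  by transitivity #|{perm 'I_0}|; [apply: eq_card | rewrite card_Sn].
rewrite mulr1n sumr_const.
rewrite [X in _ *+ X](_ : _ = 1%N); last first.
  by transitivity #|{ffun 'I_0 -> 'I_r}|; [apply: eq_card | rewrite card_ffun !card_ord].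
by rewrite mulr1n.
Qed.

Lemma main_ind (F : fieldType) (q : F) r : (0 < r)%N -> 1 - q ^+ r != 0 ->
  forall n x, good q r x -> colored_eulerian r n x q = Pk q r n x * Rn q r n x.
Proof.
move=> hr hQ; elim => [|n IH] x gx.
  have hP := Pk_neq0 0 gx.
  rewrite A0 /Rn big_ord1 /Tk /= bin_small // !muln0 /qfact big_ord0 !expr0 !mul1r.
  by rewrite divff.
apply: (mulfI hQ).
rewrite A_rec // IH // IH; last exact: good_shift.
have e1 : Pk q r n.+1 x = Pk q r n x * (1 - x * (q ^+ r) ^+ n.+1) by rewrite Pk_recr exprM.
have e2 : Pk q r n.+1 x = (1 - x) * Pk q r n (x * q ^+ r) by rewrite Pk_recl.
transitivity (qint q r * (Pk q r n x * (1 - x * (q ^+ r) ^+ n.+1)) * Rn q r n x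
   - q * qint q r * ((1 - x) * Pk q r n (x * q ^+ r)) * Rn q r n (x * q ^+ r)); first by ring.
rewrite -e1 -e2 mulrCA R_rec //; ring.
Qed.

Unset Implicit Arguments.

Theorem proposition4p1 (r n : nat) (hr : (0 < r)%N) :
  let F := {fraction {poly {poly int}}} in
  let q : F := @FracField.tofrac _ (('X : {poly int})%:P : {poly {poly int}}) in
  let t : F := @FracField.tofrac _ ('X : {poly {poly int}}) in
  colored_eulerian r n t q / \prod_(i < n.+1) (1 - t * q ^+ (r * i)%N)
  = \sum_(k < n.+1)
      q ^+ (r * 'C(k.+1, 2) + k - r * k)%N * (qint q r) ^+ k
        * qfact (q ^+ r) k * qstir q r n k * t ^+ k
      / \prod_(i < k.+1) (1 - t * q ^+ (r * i)%N).
Proof.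
move=> F q t.
have hQ : 1 - q ^+ r != 0.
  rewrite /q -tofracXn -tofrac1 -tofracB tofrac_eq0 -polyC_exp -polyC1 -polyCB polyC_eq0.
  apply/eqP => /(congr1 (fun p : {poly int} => p`_0)).
  rewrite coefB coef1 coefXn coef0 (_ : (0%N == r) = false); last by case: r hr.
  by rewrite subr0 => /eqP; rewrite oner_eq0.
have gt : good q r t.
  move=> m; rewrite /q /t -tofracXn -tofracM -tofrac1 -tofracB tofrac_eq0.
  apply/eqP => /(congr1 (fun p : {poly {poly int}} => p`_0)).
  by rewrite coefB coef1 coefXM /= coef0 subr0 => /eqP; rewrite oner_eq0.
rewrite (main_ind hr hQ n gt) -/(Pk q r n t) mulrAC divff ?mul1r; last exact: Pk_neq0.
rewrite /Rn; apply: eq_bigr => k _; rewrite /Tk /Pk; ring.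
Qed.
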